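(* Let $n$ be a positive integer, and let $g_0,h_0:\mathbb{R}\to\mathbb{R}$ be $g_0(x)=nx$, $h_0(x)=x+1$ (these generate the standard affine action of $\mathrm{BS}(1,n)$, satisfying $g_0h_0g_0^{-1}=h_0^n$). There exist neighborhoods $U$ of $g_0$ and $V$ of $h_0$ in the uniform $C^1$ topology on $C^1$ diffeomorphisms of $\mathbb{R}$ such that whenever $g\in U$, $h\in V$ and the correspondence $g_0\mapsto g$, $h_0\mapsto h$ extends to an isomorphism from the group generated by $g_0,h_0$ onto the group generated by $g,h$, the action of $\langle g,h\rangle$ on $\mathbb{R}$ is topologically conjugate to that of $\langle g_0,h_0\rangle$; i.e. there is a homeomorphism $\phi$ of $\mathbb{R}$ with $\phi g=g_0\phi$ and $\phi h=h_0\phi$.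
   Context: The uniform $C^1$ topology is the one given by the distance $\sup_{x\in\mathbb{R}}\big(|f(x)-k(x)|+|f'(x)-k'(x)|\big)$ between maps $f,k$. *)

(* Defs.v *)
From Stdlib Require Import Reals.
Open Scope R_scope.

Definition C1 (f : R -> R) : Prop :=
  exists f' : R -> R, (forall x, derivable_pt_lim f x (f' x)) /\ continuity f'.

Definition C1_diffeo (f : R -> R) : Prop :=
  C1 f /\ exists finv : R -> R,
    (forall x, finv (f x) = x) /\ (forall y, f (finv y) = y) /\ C1 finv.

Definition homeo (f : R -> R) : Prop :=
  continuity f /\ exists finv : R -> R,
    (forall x, finv (f x) = x) /\ (forall y, f (finv y) = y) /\ continuity finv.

Inductive gen (a b : R -> R) : (R -> R) -> Prop :=
| gen_id : gen a b (fun x => x)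
| gen_a : gen a b a
| gen_b : gen a b b
| gen_comp : forall f k, gen a b f -> gen a b k -> gen a b (fun x => f (k x))
| gen_inv : forall f k, gen a b f ->
    (forall x, f (k x) = x) -> (forall x, k (f x) = x) -> gen a b k.

Definition extends_to_iso (a0 b0 a b : R -> R) : Prop :=
  exists Phi : (R -> R) -> (R -> R),
    Phi a0 = a /\ Phi b0 = b /\
    (forall f, gen a0 b0 f -> gen a b (Phi f)) /\
    (forall f k, gen a0 b0 f -> gen a0 b0 k ->
       Phi (fun x => f (k x)) = (fun x => Phi f (Phi k x))) /\
    (forall f k, gen a0 b0 f -> gen a0 b0 k -> Phi f = Phi k -> f = k) /\
    (forall f', gen a b f' -> exists f, gen a0 b0 f /\ Phi f = f').

(* Main.v *)
Require Import Defs.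
From Stdlib Require Import Reals Lra Lia ZArith ClassicalEpsilon FunctionalExtensionality.
Open Scope R_scope.

Lemma le_of_eps a b : (forall eps, 0 < eps -> a < b + eps) -> a <= b.
Proof.
  intros H. destruct (Rle_or_lt a b) as [|Hl]; auto.
  specialize (H ((a - b)/2) ltac:(lra)). lra.
Qed.

Lemma half_pow_small K eps : 0 < eps -> exists k : nat, K * (/2)^k < eps.
Proof.
  intros He.
  destruct (pow_lt_1_zero (/2) ltac:(rewrite Rabs_pos_eq; lra) (eps / (Rabs K + 1)))
    as [N HN].
  { apply Rdiv_lt_0_compat; [lra| pose proof (Rabs_pos K); lra]. }
  exists N. specialize (HN N (le_n _)).
  rewrite Rabs_pos_eq in HN by (apply pow_le; lra).
  assert (0 <= (/2)^N) by (apply pow_le; lra).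
  assert (K <= Rabs K) by apply Rle_abs.
  assert (Hq : (/2)^N * (Rabs K + 1) < eps).
  { apply (Rmult_lt_compat_r (Rabs K + 1)) in HN; [|pose proof (Rabs_pos K); lra].
    unfold Rdiv in HN. rewrite Rmult_assoc, Rinv_l in HN; [lra|].
    pose proof (Rabs_pos K); lra. }
  nra.
Qed.

Lemma close_le a b K : (forall k : nat, a <= b + K * (/2)^k) -> a <= b.
Proof.
  intros H. apply le_of_eps. intros eps He.
  destruct (half_pow_small K eps He) as [k Hk]. specialize (H k). lra.
Qed.

Lemma close_eq a b K : (forall k : nat, Rabs (a - b) <= K * (/2)^k) -> a = b.
Proof.
  intros H. apply Rle_antisym; apply (close_le _ _ K); intros k; specialize (H k);
  [ pose proof (Rle_abs (a - b)) | pose proof (Rle_abs (-(a - b))); rewrite Rabs_Ropp in * ]; lra.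
Qed.

Lemma homeo_of (f : R -> R) :
  (forall x y, x <= y -> f x <= f y) ->
  (forall x y, f x = f y -> x = y) ->
  (forall u v, u < v -> exists x, u < f x < v) ->
  homeo f.
Proof.
  intros Hm Hi Hd.
  assert (Hs : forall x y, x < y -> f x < f y).
  { intros x y Hxy. destruct (Rle_lt_or_eq_dec _ _ (Hm x y ltac:(lra))) as [|E]; auto.
    apply Hi in E. lra. }
  assert (Hr : forall x y, f x < f y -> x < y).
  { intros x y H. destruct (Rlt_or_le x y) as [|H']; auto. apply Hm in H'. lra. }
  assert (Hc : continuity f).
  { intros x eps Heps. simpl in *.
    destruct (Hd (f x - eps) (f x) ltac:(lra)) as [a Ha].
    destruct (Hd (f x) (f x + eps) ltac:(lra)) as [b Hb].
    assert (a < x) by (apply Hr; lra). assert (x < b) by (apply Hr; lra).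
    exists (Rmin (x - a) (b - x)). split.
    { apply Rmin_glb_lt; lra. }
    intros y [_ Hy]. unfold Rdist in *.
    pose proof (Rmin_l (x - a) (b - x)). pose proof (Rmin_r (x - a) (b - x)).
    apply Rabs_def2 in Hy.
    assert (f a <= f y) by (apply Hm; lra). assert (f y <= f b) by (apply Hm; lra).
    apply Rabs_def1; lra. }
  assert (Hsurj : forall y, exists x, f x = y).
  { intros y.
    destruct (Hd (y - 1) y ltac:(lra)) as [x1 H1].
    destruct (Hd y (y + 1) ltac:(lra)) as [x2 H2].
    assert (x1 < x2) by (apply Hr; lra).
    assert (Hc' : continuity (fun x => f x - y)).
    { apply continuity_minus; auto. apply continuity_const. intros ? ?; auto. }
    destruct (IVT _ x1 x2 Hc' H ltac:(lra) ltac:(lra)) as [z [_ Hz]].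
    exists z. lra. }
  split; auto.
  exists (fun y => proj1_sig (constructive_indefinite_description _ (Hsurj y))).
  split; [|split].
  - intros x. destruct (constructive_indefinite_description _ _) as [z Hz]; simpl. auto.
  - intros y. destruct (constructive_indefinite_description _ _) as [z Hz]; simpl. auto.
  - intros y eps Heps. simpl in *.
    destruct (constructive_indefinite_description _ (Hsurj y)) as [x Hx]; simpl.
    assert (f (x - eps) < y) by (rewrite <- Hx; apply Hs; lra).
    assert (y < f (x + eps)) by (rewrite <- Hx; apply Hs; lra).
    exists (Rmin (y - f (x - eps)) (f (x + eps) - y)). split.
    { apply Rmin_glb_lt; lra. }
    intros z [_ Hz]. unfold Rdist in *.
    pose proof (Rmin_l (y - f (x - eps)) (f (x + eps) - y)).
    pose proof (Rmin_r (y - f (x - eps)) (f (x + eps) - y)).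
    apply Rabs_def2 in Hz.
    destruct (constructive_indefinite_description _ (Hsurj z)) as [w Hw]; simpl.
    assert (x - eps < w) by (apply Hr; lra).
    assert (w < x + eps) by (apply Hr; lra).
    apply Rabs_def1; lra.
Qed.

Lemma lim_ex (u : nat -> R) (C : R) : 0 <= C ->
  (forall j, Rabs (u (S j) - u j) <= C * (/2)^(S j)) ->
  exists l, forall k, Rabs (l - u k) <= C * (/2)^k.
Proof.
  intros HC Hs.
  assert (Ht : forall k d, Rabs (u (k + d)%nat - u k) <= C * (/2)^k - C * (/2)^(k+d)).
  { intros k d. induction d as [|d IH].
    - rewrite Nat.add_0_r. replace (u k - u k) with 0 by ring. rewrite Rabs_R0. lra.
    - replace (k + S d)%nat with (S (k + d)) by lia.
      specialize (Hs (k + d)%nat).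
      assert (E : C * (/2) ^ S (k + d) = C * (/2)^(k+d) - C * (/2)^(S (k + d))).
      { simpl. field. }
      pose proof (Rabs_triang (u (S (k + d)) - u (k + d)%nat) (u (k + d)%nat - u k)).
      replace (u (S (k + d)) - u (k + d)%nat + (u (k + d)%nat - u k)) with (u (S (k + d)) - u k) in H by ring.
      lra. }
  assert (Hb : forall k m, (k <= m)%nat -> Rabs (u m - u k) <= C * (/2)^k).
  { intros k m Hkm. replace m with (k + (m - k))%nat by lia.
    pose proof (Ht k (m - k)%nat). assert (0 <= C * (/2)^(k + (m-k))).
    { apply Rmult_le_pos; auto. apply pow_le; lra. } lra. }
  assert (Hcc : Cauchy_crit u).
  { intros eps He. destruct (half_pow_small (2 * C) eps He) as [N HN].
    exists N. intros a b Ha Hb'. unfold Rdist.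
    pose proof (Hb N a Ha). pose proof (Hb N b Hb').
    pose proof (Rabs_triang (u a - u N) (u N - u b)).
    replace (u a - u N + (u N - u b)) with (u a - u b) in H1 by ring.
    rewrite <- Rabs_Ropp in H0. replace (- (u b - u N)) with (u N - u b) in H0 by ring.
    lra. }
  destruct (R_complete u Hcc) as [l Hl].
  exists l. intros k. apply le_of_eps. intros eps He.
  destruct (Hl eps He) as [M HM].
  specialize (HM (max M k) (Nat.le_max_l _ _)). unfold Rdist in HM.
  pose proof (Hb k (max M k) (Nat.le_max_r _ _)).
  pose proof (Rabs_triang (l - u (max M k)) (u (max M k) - u k)).
  replace (l - u (max M k) + (u (max M k) - u k)) with (l - u k) in H0 by ring.
  rewrite <- Rabs_Ropp in HM. replace (- (u (max M k) - l)) with (l - u (max M k)) in HM by ring.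
  lra.
Qed.

Lemma Zind (P : Z -> Prop) : P 0%Z -> (forall i, P i -> P (i + 1)%Z) ->
  (forall i, P i -> P (i - 1)%Z) -> forall i, P i.
Proof.
  intros H0 Hs Hp. apply Z.peano_ind; auto.
Qed.

Lemma nat_big r : exists d : nat, r < INR d.
Proof.
  destruct (archimed (Rabs r)) as [H1 _].
  exists (Z.to_nat (up (Rabs r))). rewrite INR_IZR_INZ.
  pose proof (Rabs_pos r). pose proof (Rle_abs r).
  assert (0 < up (Rabs r))%Z by (apply lt_IZR; lra).
  rewrite Z2Nat.id by lia. lra.
Qed.

Section HS.
Variables (h hinv : R -> R).
Hypothesis hinv_l : forall x, hinv (h x) = x.
Hypothesis hinv_r : forall y, h (hinv y) = y.
Hypothesis h_inc : forall x y, x < y -> h x < h y.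
Hypothesis h_lo : forall x, x + /2 < h x.

Lemma h_le x y : x <= y -> h x <= h y.
Proof. intros [H|H]; [left; auto| subst; lra]. Qed.

Lemma hinv_inc x y : x < y -> hinv x < hinv y.
Proof.
  intros H. destruct (Rlt_or_le (hinv x) (hinv y)) as [|H']; auto.
  apply h_le in H'. rewrite !hinv_r in H'. lra.
Qed.

Definition hpow (j : Z) (x : R) : R :=
  if Z.leb 0 j then Nat.iter (Z.to_nat j) h x else Nat.iter (Z.to_nat (- j)) hinv x.

Lemma hpow0 x : hpow 0 x = x.
Proof. reflexivity. Qed.

Lemma hpow_succ j x : hpow (j + 1) x = h (hpow j x).
Proof.
  unfold hpow. destruct (Z.leb_spec 0 j), (Z.leb_spec 0 (j+1)); try lia.
  - replace (Z.to_nat (j+1)) with (S (Z.to_nat j)) by lia. reflexivity.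
  - replace (Z.to_nat (j+1)) with 0%nat by lia.
    replace (Z.to_nat (-j)) with 1%nat by lia. simpl. rewrite hinv_r. reflexivity.
  - replace (Z.to_nat (-j)) with (S (Z.to_nat (-(j+1)))) by lia. simpl.
    rewrite hinv_r. reflexivity.
Qed.

Lemma hpow_pred j x : hpow (j - 1) x = hinv (hpow j x).
Proof.
  rewrite <- (hinv_l (hpow (j-1) x)), <- hpow_succ.
  replace (j - 1 + 1)%Z with j by ring. reflexivity.
Qed.

Lemma hpow_add i j x : hpow (i + j) x = hpow i (hpow j x).
Proof.
  revert i. apply Zind.
  - reflexivity.
  - intros i IH. replace (i + 1 + j)%Z with (i + j + 1)%Z by ring.
    rewrite !hpow_succ, IH. reflexivity.
  - intros i IH. replace (i - 1 + j)%Z with (i + j - 1)%Z by ring.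
    rewrite !hpow_pred, IH. reflexivity.
Qed.

Lemma hpow_inc m x y : x < y -> hpow m x < hpow m y.
Proof.
  intros H. revert m. apply (Zind (fun m => hpow m x < hpow m y)).
  - exact H.
  - intros i IH. rewrite !hpow_succ. auto.
  - intros i IH. rewrite !hpow_pred. apply hinv_inc; auto.
Qed.

Lemma hpow_le m x y : x <= y -> hpow m x <= hpow m y.
Proof. intros [H|H]; [left; apply hpow_inc; auto| subst; lra]. Qed.

Lemma hpow_nat (m : nat) x : hpow (Z.of_nat m) x = Nat.iter m h x.
Proof.
  unfold hpow. destruct (Z.leb_spec 0 (Z.of_nat m)); try lia.
  rewrite Nat2Z.id. reflexivity.
Qed.

Lemma hpow_1 x : hpow 1 x = h x.
Proof. reflexivity. Qed.

Definition a (j : Z) := hpow j 0.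

Lemma a_succ j : a (j + 1) = h (a j).
Proof. apply hpow_succ. Qed.

Lemma a_lin i (d : nat) : a i + INR d / 2 <= a (i + Z.of_nat d).
Proof.
  induction d as [|d IH].
  - rewrite Z.add_0_r. simpl. lra.
  - rewrite Nat2Z.inj_succ, <- Z.add_1_r, Z.add_assoc, a_succ, S_INR.
    pose proof (h_lo (a (i + Z.of_nat d))). lra.
Qed.

Lemma a_lt i j : (i < j)%Z -> a i < a j.
Proof.
  intros H. pose proof (a_lin i (Z.to_nat (j - i))).
  rewrite Z2Nat.id in H0 by lia. replace (i + (j - i))%Z with j in H0 by ring.
  assert (1 <= INR (Z.to_nat (j - i))).
  { replace 1 with (INR 1) by reflexivity. apply le_INR. lia. }
  lra.
Qed.

Lemma a_le i j : (i <= j)%Z -> a i <= a j.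
Proof.
  intros H. destruct (Z.eq_dec i j). subst; lra. left; apply a_lt; lia.
Qed.

Lemma a0 : a 0 = 0.
Proof. reflexivity. Qed.

Lemma a_search (d : nat) : forall m y, a m <= y -> y < a (m + Z.of_nat d) ->
  exists j, a j <= y < a (j + 1).
Proof.
  induction d as [|d IH]; intros m y H1 H2.
  - rewrite Z.add_0_r in H2. lra.
  - destruct (Rlt_or_le y (a (m + 1))) as [H|H].
    + exists m. lra.
    + apply (IH (m + 1)%Z); auto. rewrite Nat2Z.inj_succ in H2.
      replace (m + 1 + Z.of_nat d)%Z with (m + Z.succ (Z.of_nat d))%Z by lia. auto.
Qed.

Lemma exN y : exists j, a j <= y < a (j + 1).
Proof.
  destruct (nat_big (2 * Rabs y)) as [d Hd].
  pose proof (Rle_abs y). pose proof (Rle_abs (-y)). rewrite Rabs_Ropp in H0.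
  apply (a_search (d + d) (- Z.of_nat d)).
  - pose proof (a_lin (- Z.of_nat d) d).
    replace (- Z.of_nat d + Z.of_nat d)%Z with 0%Z in H1 by ring. rewrite a0 in H1. lra.
  - replace (- Z.of_nat d + Z.of_nat (d + d))%Z with (0 + Z.of_nat d)%Z by lia.
    pose proof (a_lin 0 d). rewrite a0 in H1. lra.
Qed.

Definition N (y : R) : Z := proj1_sig (constructive_indefinite_description _ (exN y)).

Lemma N_spec y : a (N y) <= y < a (N y + 1).
Proof. unfold N. destruct (constructive_indefinite_description _ _) as [j Hj]. auto. Qed.

Lemma N_unique y j : a j <= y < a (j + 1) -> N y = j.
Proof.
  intros Hj. pose proof (N_spec y).
  destruct (Z.lt_trichotomy (N y) j) as [H1|[H1|H1]]; auto.
  - pose proof (a_le (N y + 1) j ltac:(lia)). lra.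
  - pose proof (a_le (j + 1) (N y) ltac:(lia)). lra.
Qed.

Lemma N_h y : N (h y) = (N y + 1)%Z.
Proof.
  apply N_unique. pose proof (N_spec y) as [H1 H2].
  rewrite !a_succ. split.
  - apply h_le; auto.
  - rewrite <- a_succ. apply h_inc; auto.
Qed.

Lemma N_hinv y : N (hinv y) = (N y - 1)%Z.
Proof.
  pose proof (N_h (hinv y)). rewrite hinv_r in H. lia.
Qed.

Lemma N_hpow m y : N (hpow m y) = (N y + m)%Z.
Proof.
  revert m. apply Zind.
  - rewrite hpow0. lia.
  - intros i IH. rewrite hpow_succ, N_h, IH. lia.
  - intros i IH. rewrite hpow_pred, N_hinv, IH. lia.
Qed.

Lemma N_mono x y : x <= y -> (N x <= N y)%Z.
Proof.
  intros H. destruct (Z.le_gt_cases (N x) (N y)) as [|H1]; auto.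
  pose proof (N_spec x). pose proof (N_spec y).
  pose proof (a_le (N y + 1) (N x) ltac:(lia)). lra.
Qed.

Lemma N_zero y : 0 <= y < h 0 -> N y = 0%Z.
Proof. intros H. apply N_unique. simpl. unfold a. simpl. exact H. Qed.


Lemma abs_sub_le A B : Rabs (A - B) <= Rabs A + Rabs B.
Proof.
  pose proof (Rabs_triang A (-B)). rewrite Rabs_Ropp in H. unfold Rminus. exact H.
Qed.

Lemma iter_comm (f : R -> R) k x : Nat.iter k f (f x) = f (Nat.iter k f x).
Proof. induction k; simpl; congruence. Qed.


Definition psi x := IZR (N x) + hpow (- N x) x / h 0.

Lemma h0pos : 0 < h 0.
Proof. pose proof (h_lo 0). lra. Qed.

Lemma psi_frac x : 0 <= hpow (- N x) x < h 0.
Proof.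
  pose proof (N_spec x) as [H1 H2]. unfold a in *.
  apply (hpow_le (- N x)) in H1. apply (hpow_inc (- N x)) in H2.
  rewrite <- hpow_add in H1, H2.
  replace (- N x + N x)%Z with 0%Z in H1 by ring.
  replace (- N x + (N x + 1))%Z with 1%Z in H2 by ring.
  rewrite hpow0 in H1. rewrite hpow_1 in H2. lra.
Qed.

Lemma psi_h x : psi (h x) = psi x + 1.
Proof.
  unfold psi. rewrite N_h, plus_IZR.
  rewrite <- hpow_1, <- hpow_add. replace (- (N x + 1) + 1)%Z with (- N x)%Z by ring.
  ring.
Qed.

Lemma psi_hinv x : psi (hinv x) = psi x - 1.
Proof. pose proof (psi_h (hinv x)). rewrite hinv_r in H. lra. Qed.

Lemma psi_hpow j x : psi (hpow j x) = psi x + IZR j.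
Proof.
  revert j. apply (Zind (fun j => psi (hpow j x) = psi x + IZR j)).
  - rewrite hpow0. ring.
  - intros i IH. rewrite hpow_succ, psi_h, IH, plus_IZR. ring.
  - intros i IH. rewrite hpow_pred, psi_hinv, IH, minus_IZR. ring.
Qed.

Lemma psi_strict x y : x < y -> psi x < psi y.
Proof.
  intros Hxy. pose proof h0pos.
  pose proof (N_mono x y ltac:(lra)).
  destruct (Z.eq_dec (N x) (N y)) as [E|E].
  - unfold psi. rewrite E. pose proof (hpow_inc (- N y) x y Hxy).
    assert (hpow (- N y) x / h 0 < hpow (- N y) y / h 0).
    { unfold Rdiv. apply Rmult_lt_compat_r; auto. apply Rinv_0_lt_compat; auto. }
    lra.
  - assert (N x + 1 <= N y)%Z by lia. apply IZR_le in H1. rewrite plus_IZR in H1.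
    pose proof (psi_frac x). pose proof (psi_frac y).
    unfold psi.
    assert (hpow (- N x) x / h 0 < 1).
    { apply (Rmult_lt_reg_r (h 0)); auto. unfold Rdiv. rewrite Rmult_assoc, Rinv_l; lra. }
    assert (0 <= hpow (- N y) y / h 0).
    { unfold Rdiv. apply Rmult_le_pos; [lra|]. left; apply Rinv_0_lt_compat; auto. }
    lra.
Qed.

Lemma psi_base t : 0 <= t < 1 -> psi (t * h 0) = t.
Proof.
  intros Ht. pose proof h0pos. unfold psi.
  rewrite (N_zero (t * h 0)) by nra. simpl. rewrite hpow0. field. lra.
Qed.

Lemma psi_surj y : exists x, psi x = y.
Proof.
  destruct (archimed y) as [A1 A2].
  set (j := (up y - 1)%Z).
  assert (Hj : IZR j = IZR (up y) - 1) by (unfold j; rewrite minus_IZR; reflexivity).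
  exists (hpow j ((y - IZR j) * h 0)).
  rewrite psi_hpow, psi_base by lra. ring.
Qed.

Lemma psi_homeo : homeo psi.
Proof.
  apply homeo_of.
  - intros x y [H|H]. left; apply psi_strict; auto. subst; lra.
  - intros x y E. destruct (Rtotal_order x y) as [H|[H|H]]; auto.
    + apply psi_strict in H. lra.
    + apply psi_strict in H. lra.
  - intros u0 v0 H. destruct (psi_surj ((u0 + v0)/2)) as [x Hx]. exists x. lra.
Qed.

Variables (g ginv : R -> R) (n : nat).
Hypothesis n2 : (2 <= n)%nat.
Hypothesis gh : forall x, g (h x) = hpow (Z.of_nat n) (g x).
Hypothesis g_inc : forall x y, x < y -> g x < g y.
Hypothesis g_exp : forall x y, x < y -> 3/2 * (y - x) <= g y - g x.
Hypothesis ginv_l : forall x, ginv (g x) = x.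
Hypothesis ginv_r : forall y, g (ginv y) = y.
Hypothesis h_hi : forall x, h x < x + 3/2.

Lemma g_le x y : x <= y -> g x <= g y.
Proof. intros [H|H]; [left; auto| subst; lra]. Qed.

Lemma g_hpow j x : g (hpow j x) = hpow (Z.of_nat n * j) (g x).
Proof.
  revert j. apply (Zind (fun j => g (hpow j x) = hpow (Z.of_nat n * j) (g x))).
  - rewrite Z.mul_0_r. reflexivity.
  - intros i IH. rewrite hpow_succ, gh, IH, <- hpow_add. f_equal. ring.
  - intros i IH.
    set (w := hpow (i - 1) x).
    assert (Hw : hpow i x = h w).
    { unfold w. rewrite <- hpow_succ. f_equal. ring. }
    rewrite Hw, gh in IH.
    rewrite <- (hpow0 (g w)).
    replace 0%Z with (- Z.of_nat n + Z.of_nat n)%Z by ring.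
    rewrite hpow_add, IH, <- hpow_add. f_equal. ring.
Qed.

Definition cc := N (g 0).

Lemma N_g y : (cc + Z.of_nat n * N y <= N (g y) <= cc + Z.of_nat n * N y + Z.of_nat n)%Z.
Proof.
  pose proof (N_spec y) as [H1 H2]. unfold a in *.
  split.
  - apply g_le in H1. apply N_mono in H1. rewrite g_hpow, N_hpow in H1. unfold cc. lia.
  - apply g_inc in H2. apply Rlt_le in H2. apply N_mono in H2.
    rewrite g_hpow, N_hpow in H2. unfold cc. lia.
Qed.

Definition gk k x := Nat.iter k g x.

Definition u x k := IZR (N (gk k x)) * (/ INR n) ^ k.

Definition CC := IZR (Z.abs cc) + INR n.

Lemma CC_nonneg : 0 <= CC.
Proof.
  unfold CC. rewrite abs_IZR. pose proof (Rabs_pos (IZR cc)). pose proof (pos_INR n). lra.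
Qed.

Lemma n_pos : 2 <= INR n.
Proof. replace 2 with (INR 2) by (simpl; ring). apply le_INR. auto. Qed.

Lemma qn_le k : 0 <= (/ INR n) ^ k <= (/2) ^ k.
Proof.
  pose proof n_pos.
  assert (0 <= / INR n <= /2).
  { split. left; apply Rinv_0_lt_compat; lra. apply Rinv_le_contravar; lra. }
  split. apply pow_le; lra. apply pow_incr. auto.
Qed.

Lemma u_step x j : Rabs (u x (S j) - u x j) <= CC * (/2)^(S j).
Proof.
  unfold u. set (z := gk j x). change (gk (S j) x) with (g z).
  pose proof (N_g z) as [H1 H2].
  apply IZR_le in H1. apply IZR_le in H2.
  rewrite !plus_IZR, !mult_IZR, <- INR_IZR_INZ in H1.
  rewrite !plus_IZR, !mult_IZR, <- !INR_IZR_INZ in H2.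
  pose proof n_pos.
  set (D := IZR (N (g z)) - INR n * IZR (N z)).
  assert (E : IZR (N (g z)) * (/ INR n) ^ S j - IZR (N z) * (/ INR n) ^ j = D * (/ INR n) ^ S j).
  { unfold D. simpl. field. lra. }
  rewrite E, Rabs_mult. pose proof (qn_le (S j)) as [Q1 Q2].
  rewrite (Rabs_pos_eq ((/ INR n) ^ S j)) by auto.
  assert (Rabs D <= CC).
  { unfold CC, D. rewrite abs_IZR. apply Rabs_le.
    pose proof (Rle_abs (IZR cc)). pose proof (Rle_abs (- IZR cc)). rewrite Rabs_Ropp in H3.
    split; lra. }
  pose proof CC_nonneg. pose proof (Rabs_pos D).
  apply Rmult_le_compat; auto.
Qed.

Definition phi x : R :=
  proj1_sig (constructive_indefinite_description _ (lim_ex (u x) CC CC_nonneg (u_step x))).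

Lemma phi_spec x k : Rabs (phi x - u x k) <= CC * (/2)^k.
Proof.
  unfold phi. destruct (constructive_indefinite_description _ _) as [l Hl]. simpl. auto.
Qed.

Lemma gk_h k x : gk k (h x) = hpow (Z.of_nat (n ^ k)) (gk k x).
Proof.
  induction k as [|k IH].
  - reflexivity.
  - change (gk (S k) (h x)) with (g (gk k (h x))).
    change (gk (S k) x) with (g (gk k x)).
    rewrite IH, g_hpow, Nat.pow_succ_r', Nat2Z.inj_mul. reflexivity.
Qed.

Lemma Mq k : INR n ^ k * (/ INR n) ^ k = 1.
Proof.
  pose proof n_pos. rewrite <- Rpow_mult_distr, Rinv_r by lra. apply pow1.
Qed.

Lemma u_h x k : u (h x) k = u x k + 1.
Proof.
  unfold u. rewrite gk_h, N_hpow, plus_IZR, <- INR_IZR_INZ, pow_INR.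
  rewrite Rmult_plus_distr_r, Mq. reflexivity.
Qed.

Lemma phi_h x : phi (h x) = phi x + 1.
Proof.
  apply (close_eq _ _ (2 * CC)). intros k.
  pose proof (phi_spec (h x) k). pose proof (phi_spec x k). rewrite u_h in H.
  pose proof (abs_sub_le (phi (h x) - (u x k + 1)) (phi x - u x k)).
  replace (phi (h x) - (u x k + 1) - (phi x - u x k)) with (phi (h x) - (phi x + 1)) in H1 by ring.
  lra.
Qed.

Lemma u_g x k : u (g x) k = INR n * u x (S k).
Proof.
  unfold u, gk. rewrite iter_comm. change (g (Nat.iter k g x)) with (Nat.iter (S k) g x).
  pose proof n_pos. simpl. field. lra.
Qed.

Lemma phi_g x : phi (g x) = INR n * phi x.
Proof.
  pose proof n_pos. pose proof CC_nonneg.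
  apply (close_eq _ _ (CC + INR n * CC)). intros k.
  pose proof (phi_spec (g x) k). pose proof (phi_spec x (S k)). rewrite u_g in H1.
  pose proof (abs_sub_le (phi (g x) - INR n * u x (S k)) (INR n * (phi x - u x (S k)))).
  replace (phi (g x) - INR n * u x (S k) - INR n * (phi x - u x (S k))) with
    (phi (g x) - INR n * phi x) in H3 by ring.
  rewrite Rabs_mult, (Rabs_pos_eq (INR n)) in H3 by lra.
  assert (0 <= (/2)^k) by (apply pow_le; lra).
  simpl in H2.
  assert (INR n * Rabs (phi x - u x (S k)) <= INR n * (CC * (/2 * (/2)^k))).
  { apply Rmult_le_compat_l; lra. }
  assert (INR n * (CC * (/ 2 * (/ 2) ^ k)) <= INR n * CC * (/2)^k).
  { assert (0 <= INR n * CC * (/2)^k) by (apply Rmult_le_pos; [apply Rmult_le_pos|]; lra).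
    lra. }
  lra.
Qed.

Lemma phi_hinv x : phi (hinv x) = phi x - 1.
Proof. pose proof (phi_h (hinv x)). rewrite hinv_r in H. lra. Qed.

Lemma phi_hpow j x : phi (hpow j x) = phi x + IZR j.
Proof.
  revert j. apply (Zind (fun j => phi (hpow j x) = phi x + IZR j)).
  - rewrite hpow0. ring.
  - intros i IH. rewrite hpow_succ, phi_h, IH, plus_IZR. ring.
  - intros i IH. rewrite hpow_pred, phi_hinv, IH, minus_IZR. ring.
Qed.

Lemma phi_gk k x : phi (gk k x) = INR n ^ k * phi x.
Proof.
  induction k as [|k IH].
  - simpl. ring.
  - change (gk (S k) x) with (g (gk k x)). rewrite phi_g, IH. simpl. ring.
Qed.

Lemma gk_ginv k x : gk k (Nat.iter k ginv x) = x.
Proof.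
  induction k as [|k IH]; auto.
  unfold gk in *. change (Nat.iter (S k) g (Nat.iter (S k) ginv x)) with
    (g (Nat.iter k g (ginv (Nat.iter k ginv x)))).
  rewrite <- iter_comm, ginv_r. auto.
Qed.

Lemma gk_le k x y : x <= y -> gk k x <= gk k y.
Proof. induction k; simpl; auto. intros H. apply g_le. auto. Qed.

Lemma phi_mono x y : x <= y -> phi x <= phi y.
Proof.
  intros Hxy. apply (close_le _ _ (2 * CC)). intros k.
  assert (u x k <= u y k).
  { unfold u. apply Rmult_le_compat_r. apply qn_le. apply IZR_le. apply N_mono, gk_le. auto. }
  pose proof (phi_spec x k). pose proof (phi_spec y k).
  pose proof (Rle_abs (phi x - u x k)). pose proof (Rle_abs (-(phi y - u y k))).
  rewrite Rabs_Ropp in H3. lra.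
Qed.

Lemma phi_dense u0 v0 : u0 < v0 -> exists x, u0 < phi x < v0.
Proof.
  intros Huv. pose proof n_pos.
  destruct (half_pow_small 1 (v0 - u0) ltac:(lra)) as [k Hk].
  pose proof (qn_le k) as [Q1 Q2].
  set (M := INR n ^ k). set (q := (/ INR n) ^ k).
  assert (HMq : M * q = 1) by apply Mq.
  assert (Hq : 0 < q).
  { unfold q. apply pow_lt. apply Rinv_0_lt_compat. lra. }
  set (p0 := phi 0).
  set (j := up ((u0 - p0) * M)).
  destruct (archimed ((u0 - p0) * M)) as [A1 A2]. fold j in A1, A2.
  exists (Nat.iter k ginv (hpow j (gk k 0))).
  assert (E : phi (Nat.iter k ginv (hpow j (gk k 0))) * M = M * p0 + IZR j).
  { rewrite Rmult_comm. unfold M. rewrite <- phi_gk, gk_ginv, phi_hpow, phi_gk. reflexivity. }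
  assert (E2 : phi (Nat.iter k ginv (hpow j (gk k 0))) - u0 = (IZR j - (u0 - p0) * M) * q).
  { replace (phi (Nat.iter k ginv (hpow j (gk k 0)))) with
      (phi (Nat.iter k ginv (hpow j (gk k 0))) * M * q) by (rewrite Rmult_assoc, HMq; ring).
    rewrite E. replace ((M * p0 + IZR j) * q) with (p0 * (M * q) + IZR j * q) by ring.
    replace ((IZR j - (u0 - p0) * M) * q) with (IZR j * q - (u0 - p0) * (M * q)) by ring.
    rewrite HMq. ring. }
  assert (0 < (IZR j - (u0 - p0) * M) * q) by (apply Rmult_lt_0_compat; lra).
  assert ((IZR j - (u0 - p0) * M) * q <= 1 * q) by (apply Rmult_le_compat_r; lra).
  fold q in Q2. lra.
Qed.

Lemma gk_exp k y z : y < z -> (3/2)^k * (z - y) <= gk k z - gk k y.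
Proof.
  intros Hyz. induction k as [|k IH].
  - simpl. lra.
  - change (gk (S k) z - gk (S k) y) with (g (gk k z) - g (gk k y)).
    assert (0 < (3/2)^k) by (apply pow_lt; lra).
    assert (0 < (3/2)^k * (z - y)) by (apply Rmult_lt_0_compat; lra).
    pose proof (g_exp (gk k y) (gk k z) ltac:(lra)).
    simpl. lra.
Qed.

Lemma phi_inj_lt y z : y < z -> phi y <> phi z.
Proof.
  intros Hyz E.
  destruct (pow_lt_1_zero (2/3) ltac:(rewrite Rabs_pos_eq; lra) ((z - y)/3) ltac:(lra))
    as [k Hk].
  specialize (Hk k (le_n _)). rewrite Rabs_pos_eq in Hk by (apply pow_le; lra).
  set (P := (3/2)^k) in *. set (q := (2/3)^k) in *.
  assert (HPq : P * q = 1).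
  { unfold P, q. rewrite <- Rpow_mult_distr. replace (3/2 * (2/3)) with 1 by field. apply pow1. }
  assert (HP : 0 < P) by (apply pow_lt; lra).
  pose proof (gk_exp k y z Hyz). fold P in H.
  assert (3 < P * (z - y)) by nra.
  set (Y := gk k y) in *. set (Z := gk k z) in *.
  pose proof (h_hi Y). pose proof (h_hi (h Y)).
  pose proof (phi_mono (h (h Y)) Z ltac:(lra)).
  rewrite !phi_h in H3.
  unfold Y, Z in H3. rewrite !phi_gk, E in H3. lra.
Qed.

Lemma phi_homeo : homeo phi.
Proof.
  apply homeo_of.
  - apply phi_mono.
  - intros x y E. destruct (Rtotal_order x y) as [H|[H|H]]; auto.
    + exfalso. apply (phi_inj_lt x y H E).
    + exfalso. apply (phi_inj_lt y x H). auto.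
  - apply phi_dense.
Qed.

End HS.

Lemma deriv_lb (f f' : R -> R) m x y :
  (forall x, derivable_pt_lim f x (f' x)) -> (forall x, m <= f' x) -> x < y ->
  m * (y - x) <= f y - f x.
Proof.
  intros Hd Hm Hxy. destruct (MVT_cor2 f f' x y Hxy (fun c _ => Hd c)) as [c [E _]].
  rewrite E. apply Rmult_le_compat_r; [lra| auto].
Qed.

Lemma gen_bij (a b ai bi : R -> R) :
  (forall x, ai (a x) = x) -> (forall y, a (ai y) = y) ->
  (forall x, bi (b x) = x) -> (forall y, b (bi y) = y) ->
  forall f, gen a b f -> exists fi, (forall x, fi (f x) = x) /\ (forall y, f (fi y) = y).
Proof.
  intros H1 H2 H3 H4 f Hf. induction Hf.
  - exists (fun x => x). split; auto.
  - exists ai. auto.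
  - exists bi. auto.
  - destruct IHHf1 as [fi [F1 F2]]. destruct IHHf2 as [ki [K1 K2]].
    exists (fun x => ki (fi x)). split; intros; [rewrite F1; auto| rewrite K2; auto].
  - exists f. split; auto.
Qed.

Lemma iso_id (a0 b0 a b ai bi : R -> R) :
  extends_to_iso a0 b0 a b ->
  (forall x, ai (a x) = x) -> (forall y, a (ai y) = y) ->
  (forall x, bi (b x) = x) -> (forall y, b (bi y) = y) ->
  a0 = (fun x => x) -> forall x, a x = x.
Proof.
  intros [Phi [P1 [P2 [P3 [P4 [P5 P6]]]]]] H1 H2 H3 H4 E.
  assert (Hg : gen a0 b0 (fun x => x)) by constructor.
  pose proof (P4 _ _ Hg Hg) as HC. simpl in HC.
  destruct (gen_bij a b ai bi H1 H2 H3 H4 _ (P3 _ Hg)) as [fi [F1 F2]].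
  intros x. rewrite <- P1, E.
  pose proof (f_equal (fun F => fi (F x)) HC) as Q. simpl in Q.
  rewrite !F1 in Q. symmetry. exact Q.
Qed.

Lemma iso_rel (a0 b0 a b : R -> R) (m : nat) :
  extends_to_iso a0 b0 a b ->
  (forall x, a0 (b0 x) = Nat.iter (S m) b0 (a0 x)) ->
  forall x, a (b x) = Nat.iter (S m) b (a x).
Proof.
  intros [Phi [P1 [P2 [P3 [P4 [P5 P6]]]]]] Hr.
  assert (Hp : forall k, gen a0 b0 (fun x => Nat.iter (S k) b0 x) /\
                 Phi (fun x => Nat.iter (S k) b0 x) = (fun x => Nat.iter (S k) b x)).
  { induction k as [|k [G E]].
    - split. exact (gen_b a0 b0). exact P2.
    - split.
      + change (gen a0 b0 (fun x => b0 ((fun y => Nat.iter (S k) b0 y) x))).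
        apply gen_comp; auto. apply gen_b.
      + change (Phi (fun x => b0 ((fun y => Nat.iter (S k) b0 y) x)) =
                (fun x => Nat.iter (S (S k)) b x)).
        rewrite P4; [|apply gen_b|auto]. rewrite E, P2. reflexivity. }
  destruct (Hp m) as [G E].
  assert (F : (fun x => a0 (b0 x)) = (fun x => (fun y => Nat.iter (S m) b0 y) (a0 x))).
  { apply functional_extensionality. auto. }
  apply (f_equal Phi) in F.
  rewrite P4 in F; [|apply gen_a|apply gen_b].
  assert (Q : Phi (fun x => Nat.iter (S m) b0 (a0 x)) = (fun x => Nat.iter (S m) b (a x))).
  { change (Phi (fun x => (fun y => Nat.iter (S m) b0 y) (a0 x)) =
            (fun x => (fun y => Nat.iter (S m) b y) (a x))).
    rewrite <- E, <- P1. exact (P4 _ _ G (gen_a _ _)). }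
  rewrite Q, P1, P2 in F. intros x. apply (f_equal (fun F => F x)) in F. simpl in F. exact F.
Qed.

Lemma iter_tr k y : Nat.iter k (fun x => x + 1) y = y + INR k.
Proof. induction k; simpl Nat.iter. simpl; ring. rewrite IHk, S_INR. ring. Qed.

Theorem theorem5p8 (n : nat) (hn : (0 < n)%nat) :
  let g0 := fun x : R => INR n * x in
  let h0 := fun x : R => x + 1 in
  exists epsU epsV : R, 0 < epsU /\ 0 < epsV /\
    forall (g g' h h' : R -> R),
      C1_diffeo g -> C1_diffeo h ->
      (forall x, derivable_pt_lim g x (g' x)) ->
      (forall x, derivable_pt_lim h x (h' x)) ->
      (forall x, Rabs (g x - g0 x) + Rabs (g' x - INR n) < epsU) ->
      (forall x, Rabs (h x - h0 x) + Rabs (h' x - 1) < epsV) ->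
      extends_to_iso g0 h0 g h ->
      exists phi : R -> R, homeo phi /\
        (forall x, phi (g x) = g0 (phi x)) /\
        (forall x, phi (h x) = h0 (phi x)).
Proof.
  intros g0 h0. exists (1/2), (1/2). split; [lra|split;[lra|]].
  intros g g' h h' [_ [ginv [gl [gr _]]]] [_ [hinv [hl [hr _]]]] Dg Dh Bg Bh Iso.
  assert (Bh' : forall x, x + /2 < h x /\ h x < x + 3/2 /\ /2 < h' x).
  { intros x. specialize (Bh x). unfold h0 in Bh.
    pose proof (Rabs_pos (h x - (x + 1))). pose proof (Rabs_pos (h' x - 1)).
    assert (A1 : Rabs (h x - (x + 1)) < 1/2) by lra.
    assert (A2 : Rabs (h' x - 1) < 1/2) by lra.
    apply Rabs_def2 in A1. apply Rabs_def2 in A2. lra. }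
  assert (hlo : forall x, x + /2 < h x) by (intros x; apply Bh').
  assert (hhi : forall x, h x < x + 3/2) by (intros x; apply Bh').
  assert (hinc : forall x y, x < y -> h x < h y).
  { intros x y Hxy. pose proof (deriv_lb h h' (/2) x y Dh ltac:(intros z; left; apply Bh') Hxy).
    lra. }
  assert (Bg' : forall x, INR n - /2 < g' x).
  { intros x. specialize (Bg x).
    pose proof (Rabs_pos (g x - g0 x)). pose proof (Rabs_pos (g' x - INR n)).
    assert (A2 : Rabs (g' x - INR n) < 1/2) by lra.
    apply Rabs_def2 in A2. lra. }
  destruct n as [|[|m]]; [lia| |].
  -
    assert (Hid : forall x, g x = x).
    { apply (iso_id g0 h0 g h ginv hinv Iso gl gr hl hr).
      apply functional_extensionality. intros x. unfold g0. simpl. ring. }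
    exists (psi h hinv hr hlo). split; [|split].
    + apply psi_homeo; auto.
    + intros x. rewrite Hid. unfold g0. simpl. ring_simplify. reflexivity.
    + intros x. unfold h0. apply psi_h; auto.
  -
    assert (n2 : (2 <= S (S m))%nat) by lia.
    assert (Hn : 2 <= INR (S (S m))).
    { replace 2 with (INR 2) by (simpl; ring). apply le_INR. lia. }
    assert (gh : forall x, g (h x) = hpow h hinv (Z.of_nat (S (S m))) (g x)).
    { intros x. rewrite hpow_nat.
      apply (iso_rel g0 h0 g h (S m) Iso). intros y. unfold g0, h0.
      rewrite iter_tr. ring. }
    assert (gexp : forall x y, x < y -> 3/2 * (y - x) <= g y - g x).
    { intros x y Hxy. apply (deriv_lb g g' (3/2) x y Dg); auto.
      intros z. pose proof (Bg' z). lra. }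
    assert (ginc : forall x y, x < y -> g x < g y).
    { intros x y Hxy. pose proof (gexp x y Hxy). lra. }
    exists (phi h hinv hl hr hinc hlo g (S (S m)) n2 gh ginc). split; [|split].
    + apply (phi_homeo h hinv hl hr hinc hlo g ginv (S (S m)) n2 gh ginc gexp gr hhi).
    + intros x. unfold g0. eapply phi_g; eauto.
    + intros x. unfold h0. apply phi_h.
Qed.
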